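(* For any positive integers $q,z,m,t$ with $q\geq 2$, $z<q$ and $t<m$, there exists a $\big(\binom{m}{t}q^t\lfloor\frac{q-1}{q-z}\rfloor^t,\ q^m,\ q^m-(q-z)^tq^{m-t},\ (q-z)^tq^m\big)$ placement delivery array. In particular there is a corresponding coded caching scheme with $\frac{M}{N}=1-(\frac{q-z}{q})^t$ and rate $R=(q-z)^t$.
   Context: A $(K,F,Z,S)$ placement delivery array (PDA) is an $F\times K$ array whose entries are either a special symbol $*$ or one of $S$ distinct non-star symbols (identified with $1,\ldots,S$), such that: (C1) $*$ appears exactly $Z$ times in each column; (C2) each of the $S$ symbols occurs at least once; (C3) for any two distinct entries $p_{j_1,k_1}=p_{j_2,k_2}=s$ with $s$ a non-star symbol, we have $j_1\neq j_2$, $k_1\neq k_2$, and $p_{j_1,k_2}=p_{j_2,k_1}=*$. A $(K,F,Z,S)$ PDA yields an $F$-division coded caching scheme for $K$ users with memory ratio $M/N=Z/F$ and rate $R=S/F$. *)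

(* Defs.v *)
From mathcomp Require Import all_boot.
Set Implicit Arguments. Unset Strict Implicit. Unset Printing Implicit Defensive.

(* A (K,F,Z,S) placement delivery array: an F x K array whose entries are
   either the star symbol (represented by [None]) or one of S non-star
   symbols (represented by [Some s], s : 'I_S). *)
Definition array (K F S : nat) := 'I_F -> 'I_K -> option 'I_S.

Definition is_PDA (K F Z S : nat) (P : array K F S) : Prop :=
  (forall k : 'I_K, #|[set j : 'I_F | P j k == None]| = Z) /\
  (forall s : 'I_S, exists j : 'I_F, exists k : 'I_K, P j k = Some s) /\
  (forall (j1 j2 : 'I_F) (k1 k2 : 'I_K) (s : 'I_S),
     (j1, k1) <> (j2, k2) -> P j1 k1 = Some s -> P j2 k2 = Some s ->
     [/\ j1 <> j2, k1 <> k2, P j1 k2 = None & P j2 k1 = None]).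

Definition PDA_exists (K F Z S : nat) : Prop :=
  exists P : array K F S, is_PDA Z P.

(* Main.v *)
Require Import Defs.
From mathcomp Require Import all_boot zify.
Set Implicit Arguments. Unset Strict Implicit. Unset Printing Implicit Defensive.

Definition dif (Q w v : nat) := (w + Q - v) %% Q.

Lemma ar1 Q w v : v < Q -> w < Q -> w = (v + dif Q w v) %% Q.
Proof.
move=> hv hw; rewrite /dif; case: (leqP v w) => h.
  have -> : w + Q - v = (w - v) + Q by lia.
  rewrite modnDr (@modn_small (w - v)); last by lia.
  have -> : v + (w - v) = w by lia.
  by rewrite modn_small.
rewrite (@modn_small (w + Q - v)); last by lia.
have -> : v + (w + Q - v) = w + Q by lia.
by rewrite modnDr modn_small.
Qed.

Lemma ar2 Q v d : v < Q -> d < Q -> dif Q ((v + d) %% Q) v = d.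
Proof.
move=> hv hd; rewrite /dif; case: (ltnP (v + d) Q) => h.
  rewrite (modn_small h).
  have -> : v + d + Q - v = d + Q by lia.
  by rewrite modnDr modn_small.
have -> : (v + d) %% Q = v + d - Q.
  rewrite -{1}(subnK h) modnDr modn_small //; lia.
have -> : v + d - Q + Q - v = d by lia.
by rewrite modn_small.
Qed.

Lemma ar3 Q v : dif Q v v = 0.
Proof. by rewrite /dif addKn modnn. Qed.
Lemma transfer (R C Y : finType) (K F Z S : nat) (p : R -> C -> option Y) :
  #|R| = F -> #|C| = K -> #|Y| = S ->
  (forall c, #|[set x | p x c == None]| = Z) ->
  (forall y, exists x c, p x c = Some y) ->
  (forall x1 x2 c1 c2 y, (x1, c1) <> (x2, c2) -> p x1 c1 = Some y -> p x2 c2 = Some y ->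
     [/\ x1 <> x2, c1 <> c2, p x1 c2 = None & p x2 c1 = None]) ->
  PDA_exists K F Z S.
Proof.
move=> <- <- <- H1 H2 H3.
exists (fun j k => omap (@enum_rank Y) (p (enum_val j) (enum_val k))).
split; [|split].
- move=> k; rewrite -(H1 (enum_val k)).
  rewrite -(card_imset _ (@enum_val_inj _ R)).
  apply: eq_card => x; rewrite !inE.
  apply/imsetP/idP.
    case=> j; rewrite inE => h ->.
    by case: (p (enum_val j) (enum_val k)) h.
  move=> h; exists (enum_rank x); last by rewrite enum_rankK.
  by rewrite inE enum_rankK; case: (p x (enum_val k)) h.
- move=> s; have [x [c h]] := H2 (enum_val s).
  exists (enum_rank x), (enum_rank c); by rewrite !enum_rankK h /= enum_valK.
- move=> j1 j2 k1 k2 s hne.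
  case e1: (p (enum_val j1) (enum_val k1)) => [y1|] //= [h1].
  case e2: (p (enum_val j2) (enum_val k2)) => [y2|] //= [h2].
  have hy : y1 = y2 by apply: enum_rank_inj; rewrite h1 h2.
  subst y2.
  have hne' : (enum_val j1, enum_val k1) <> (enum_val j2, enum_val k2).
    by case=> /enum_val_inj a /enum_val_inj b; apply: hne; rewrite a b.
  have [a b c d] := H3 _ _ _ _ _ hne' e1 e2.
  split.
  + by move=> E; apply: a; rewrite E.
  + by move=> E; apply: b; rewrite E.
  + by rewrite c.
  + by rewrite d.
Qed.

Definition pos (m t : nat) (T : {set 'I_m.+1}) (i : 'I_m.+1) : 'I_t.+1 :=
  inord (index i (enum T)).
Definition elt (m : nat) (T : {set 'I_m.+1}) (l : nat) : 'I_m.+1 :=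
  nth ord0 (enum T) l.

Lemma elt_pos m t (T : {set 'I_m.+1}) i :
  #|T| = t.+1 -> i \in T -> elt T (pos t T i) = i.
Proof.
move=> hT hi; rewrite /elt /pos inordK; first by rewrite nth_index // mem_enum.
by rewrite -hT cardE index_mem mem_enum.
Qed.

Lemma pos_elt m t (T : {set 'I_m.+1}) (l : 'I_t.+1) :
  #|T| = t.+1 -> pos t T (elt T l) = l /\ elt T l \in T.
Proof.
move=> hT; have hl : l < size (enum T) by rewrite -cardE hT.
split; last by rewrite /elt -mem_enum mem_nth.
apply: val_inj; rewrite /pos /elt /= index_uniq ?enum_uniq // inordK //.
Qed.

Definition okc (Q S w v c : nat) := (0 < dif Q w v) && ((dif Q w v).-1 %/ S == c).

Notation Row m q := {ffun 'I_m.+1 -> 'I_q.+1}.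
Notation Tset m t := {T : {set 'I_m.+1} | #|T| == t.+1}.
Notation Col m t q a := (Tset m t * {ffun 'I_t.+1 -> 'I_q.+1} * {ffun 'I_t.+1 -> 'I_a.+1})%type.
Notation Sym m t q s := ({ffun 'I_m.+1 -> 'I_q.+1} * {ffun 'I_t.+1 -> 'I_s.+1})%type.

Definition ok m t q s a (x : Row m q) (col : Col m t q a) : bool :=
  let: (T, v, c) := col in
  [forall i in val T, okc q.+1 s.+1 (x i) (v (pos t (val T) i)) (c (pos t (val T) i))].

Definition symof m t q s a (x : Row m q) (col : Col m t q a) : Sym m t q s :=
  let: (T, v, c) := col in
  ([ffun i => if i \in val T then v (pos t (val T) i) else x i],
   [ffun l : 'I_t.+1 => inord ((dif q.+1 (x (elt (val T) l)) (v l)).-1 %% s.+1)]).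

Definition pp m t q s a (x : Row m q) (col : Col m t q a) : option (Sym m t q s) :=
  if ok s x col then Some (symof s x col) else None.

Definition rowof m t q s a (y : Row m q) (e : {ffun 'I_t.+1 -> 'I_s.+1})
   (T : {set 'I_m.+1}) (c : {ffun 'I_t.+1 -> 'I_a.+1}) : Row m q :=
  [ffun i => if i \in T then inord ((y i + (1 + c (pos t T i) * s.+1 + e (pos t T i))) %% q.+1)
             else y i].

Definition vy m t q (y : Row m q) (T : {set 'I_m.+1}) : {ffun 'I_t.+1 -> 'I_q.+1} :=
  [ffun l : 'I_t.+1 => y (elt T l)].

Lemma D_lt q s a c e : a.+1 * s.+1 <= q -> c < a.+1 -> e < s.+1 -> 1 + c * s.+1 + e < q.+1.
Proof. move=> h hc he; nia. Qed.

Lemma D_div s c e : e < s.+1 -> (1 + c * s.+1 + e).-1 %/ s.+1 = c /\ (1 + c * s.+1 + e).-1 %% s.+1 = e.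
Proof.
move=> he; rewrite -addnA add1n /=; split.
  by rewrite divnMDl // divn_small // addn0.
by rewrite modnMDl modn_small.
Qed.

Lemma inord_mod q n : (inord (n %% q.+1) : 'I_q.+1) = n %% q.+1 :> nat.
Proof. by rewrite inordK // ltn_pmod. Qed.

Lemma lemA m t q s a (x : Row m q) (T : Tset m t) (v : {ffun 'I_t.+1 -> 'I_q.+1}) (c : {ffun 'I_t.+1 -> 'I_a.+1}) :
  ok s x (T, v, c) ->
  x = rowof (symof s x (T, v, c)).1 (symof s x (T, v, c)).2 (val T) c /\
  v = vy t (symof s x (T, v, c)).1 (val T).
Proof.
have hT : #|val T| = t.+1 by apply/eqP; exact: (valP T).
move=> /forall_inP hok; split.
  apply/ffunP => i; rewrite /rowof /symof /= !ffunE.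
  case hi: (i \in sval T); last by [].
  apply: ord_inj; rewrite inord_mod elt_pos // inord_mod.
  have /andP [h0 hc] := hok i hi.
  set d := dif _ _ _ in h0 hc *.
  have -> : 1 + c (pos t (val T) i) * s.+1 + d.-1 %% s.+1 = d.
    rewrite -(eqP hc); have := divn_eq d.-1 s.+1; lia.
  rewrite -ar1 //.
apply/ffunP => l; rewrite /vy /symof !ffunE /=.
have [hp hm] := pos_elt l hT.
by rewrite hm hp.
Qed.

Lemma rowof_in m t q s a (y : Row m q) (e : {ffun 'I_t.+1 -> 'I_s.+1}) (T : Tset m t)
  (c : {ffun 'I_t.+1 -> 'I_a.+1}) i :
  a.+1 * s.+1 <= q -> i \in val T ->
  dif q.+1 (rowof y e (val T) c i) (vy t y (val T) (pos t (val T) i)) =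
    1 + c (pos t (val T) i) * s.+1 + e (pos t (val T) i).
Proof.
have hT : #|val T| = t.+1 by apply/eqP; exact: (valP T).
move=> has hi; rewrite /rowof /vy !ffunE hi elt_pos // inord_mod ar2 //.
exact: (D_lt has (ltn_ord _) (ltn_ord _)).
Qed.

Lemma lemB m t q s a (y : Row m q) (e : {ffun 'I_t.+1 -> 'I_s.+1}) (T : Tset m t)
  (c : {ffun 'I_t.+1 -> 'I_a.+1}) :
  a.+1 * s.+1 <= q ->
  ok s (rowof y e (val T) c) (T, vy t y (val T), c) /\
  symof s (rowof y e (val T) c) (T, vy t y (val T), c) = (y, e).
Proof.
have hT : #|val T| = t.+1 by apply/eqP; exact: (valP T).
move=> has; split.
  apply/forall_inP => i hi; rewrite /okc.
  have := @rowof_in _ _ _ _ _ y e T c i has hi; rewrite /vy ffunE => ->.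
  have [h1 h2] := D_div (c (pos t (val T) i)) (ltn_ord (e (pos t (val T) i))).
  by rewrite h1 eqxx addnC addnA addn1.
rewrite /symof /=; congr pair; apply/ffunP => i; rewrite !ffunE.
  case hi: (i \in sval T).
    by rewrite elt_pos.
  by rewrite ?hi.
have [hp hm] := pos_elt i hT.
have [h1 h2] := D_div (c i) (ltn_ord (e i)).
apply: ord_inj; rewrite hm hp inordK; last by rewrite ltn_pmod.
rewrite inord_mod ar2 ?h2 //.
exact: (D_lt has (ltn_ord _) (ltn_ord _)).
Qed.

Lemma lemK m t q s a (y : Row m q) (e : {ffun 'I_t.+1 -> 'I_s.+1}) (T1 T2 : Tset m t)
  (c1 c2 : {ffun 'I_t.+1 -> 'I_a.+1}) :
  a.+1 * s.+1 <= q -> (val T1, c1) <> (val T2, c2) ->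
  ~~ ok s (rowof y e (val T1) c1) (T2, vy t y (val T2), c2).
Proof.
have hT1 : #|val T1| = t.+1 by apply/eqP; exact: (valP T1).
have hT2 : #|val T2| = t.+1 by apply/eqP; exact: (valP T2).
move=> has hne; case: (eqVneq (val T1) (val T2)) => hTT.
  case: (pickP (fun l => c1 l != c2 l)) => [l hl|h]; last first.
    exfalso; apply: hne; rewrite hTT; congr pair; apply/ffunP => l.
    by apply/eqP; have := h l; move/negbFE.
  apply/negP => /forall_inP H.
  have [hp hm] := pos_elt l hT2.
  have := H _ hm; rewrite /okc -hTT.
  rewrite -hTT in hp hm.
  rewrite (@rowof_in _ _ _ _ _ y e T1 c1 _ has hm) hp.
  have [h1 h2] := D_div (c1 l) (ltn_ord (e l)).
  rewrite h1 => /andP [_ /eqP E]; apply: (negP hl); apply/eqP; exact: ord_inj.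
have hs : ~~ (val T2 \subset val T1).
  apply/negP => hsub; move: hTT; rewrite eq_sym eqEcard hsub hT1 hT2 leqnn.
  by [].
case/subsetPn: hs => i hi2 hi1.
apply/negP => /forall_inP H.
have := H _ hi2; rewrite /okc /rowof /vy !ffunE (negbTE hi1) elt_pos //.
by rewrite ar3.
Qed.

Lemma card_okc q s a (v : 'I_q.+1) (c : 'I_a.+1) :
  a.+1 * s.+1 <= q -> #|[pred w : 'I_q.+1 | okc q.+1 s.+1 w v c]| = s.+1.
Proof.
move=> has.
pose f (e : 'I_s.+1) : 'I_q.+1 := inord ((v + (1 + c * s.+1 + e)) %% q.+1).
have hf e : dif q.+1 (f e) v = 1 + c * s.+1 + e.
  by rewrite /f inord_mod ar2 //; exact: (D_lt has (ltn_ord _) (ltn_ord _)).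
have finj : injective f.
  move=> e1 e2 E; apply: ord_inj; have := hf e1; rewrite E hf; lia.
rewrite -[RHS](card_ord s.+1) -cardsT -(card_imset _ finj).
apply: eq_card => w; rewrite inE; apply/idP/imsetP.
  rewrite /okc => /andP [h0 hc].
  exists (inord ((dif q.+1 w v).-1 %% s.+1)); first by rewrite inE.
  apply: ord_inj; rewrite /f inord_mod inord_mod.
  set d := dif _ _ _ in h0 hc *.
  have -> : 1 + c * s.+1 + d.-1 %% s.+1 = d.
    rewrite -(eqP hc); have := divn_eq d.-1 s.+1; lia.
  by rewrite -ar1.
case=> e _ ->; rewrite /okc hf.
have [h1 _] := D_div c (ltn_ord e).
by rewrite h1 eqxx addnC addnA addn1.
Qed.

Lemma foldr_prod (r : seq nat) : foldr muln 1 r = \prod_(i <- r) i.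
Proof. elim: r => [|x r IH]; first by rewrite big_nil. by rewrite big_cons -IH. Qed.

Lemma count_ok m t q s a (T : Tset m t) (v : {ffun 'I_t.+1 -> 'I_q.+1})
  (c : {ffun 'I_t.+1 -> 'I_a.+1}) :
  a.+1 * s.+1 <= q ->
  #|[set x : Row m q | ok s x (T, v, c)]| = s.+1 ^ t.+1 * q.+1 ^ (m.+1 - t.+1).
Proof.
have hT : #|val T| = t.+1 by apply/eqP; exact: (valP T).
move=> has.
pose F (i : 'I_m.+1) : pred 'I_q.+1 := fun w => if i \in val T then
   okc q.+1 s.+1 w (v (pos t (val T) i)) (c (pos t (val T) i)) else true.
have -> : #|[set x : Row m q | ok s x (T, v, c)]| = #|family F|.
  apply: eq_card => x; rewrite inE; apply/forall_inP/familyP.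
    move=> H i; rewrite unfold_in /F; case: ifP => hi //.
    by apply: H.
  move=> H i hi; have := H i; rewrite unfold_in /F hi; exact.
rewrite card_family foldr_prod big_image /=.
rewrite (bigID (mem (val T))) /=.
rewrite (eq_bigr (fun _ => s.+1)); last first.
  move=> i hi; rewrite -(card_okc (v (pos t (val T) i)) (c (pos t (val T) i)) has).
  by apply: eq_card => w; rewrite inE unfold_in /F hi.
rewrite [X in _ * X](eq_bigr (fun _ => q.+1)); last first.
  move=> i hi; rewrite -[RHS](card_ord q.+1).
  by apply: eq_card => w; rewrite unfold_in /F (negbTE hi).
rewrite prod_nat_const hT.
rewrite (eq_bigl (fun i => i \in ~: val T)); last by move=> i; rewrite /= in_setC.
rewrite prod_nat_const.
have hC := cardsC (val T); rewrite card_ord hT in hC.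
have -> : #|~: val T| = m.+1 - t.+1 by lia.
by [].
Qed.

Lemma mainPDA m t q s a : a.+1 * s.+1 <= q -> t <= m ->
  PDA_exists ('C(m.+1, t.+1) * q.+1 ^ t.+1 * a.+1 ^ t.+1) (q.+1 ^ m.+1)
    (q.+1 ^ m.+1 - s.+1 ^ t.+1 * q.+1 ^ (m.+1 - t.+1)) (s.+1 ^ t.+1 * q.+1 ^ m.+1).
Proof.
move=> has htm.
apply: (@transfer (Row m q) (Col m t q a) (Sym m t q s) _ _ _ _ (@pp m t q s a)).
- by rewrite card_ffun !card_ord.
- rewrite !card_prod card_sig !card_ffun !card_ord.
  have := card_draws 'I_m.+1 t.+1; rewrite card_ord => <-.
  by congr (_ * _ * _); apply: eq_card => T; rewrite inE.
- by rewrite card_prod !card_ffun !card_ord mulnC.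
- move=> [[T v] c].
  have -> : #|[set x | pp s x (T, v, c) == None]| = #|~: [set x : Row m q | ok s x (T, v, c)]|.
    by apply: eq_card => x; rewrite !inE /pp; case: ok.
  have hC := cardsC [set x : Row m q | ok s x (T, v, c)].
  rewrite card_ffun !card_ord count_ok // in hC.
  by rewrite -hC addKn.
- move=> [y e].
  have : 0 < #|[set A : {set 'I_m.+1} | #|A| == t.+1]| by rewrite card_draws card_ord bin_gt0.
  case/card_gt0P => T0; rewrite inE => hT0.
  pose T : Tset m t := exist _ T0 hT0.
  pose c : {ffun 'I_t.+1 -> 'I_a.+1} := [ffun _ => ord0].
  exists (rowof y e T0 c), (T, vy t y T0, c).
  have [h1 h2] := @lemB _ _ _ _ _ y e T c has.
  by rewrite /pp h1 h2.
- move=> x1 x2 [[T1 v1] c1] [[T2 v2] c2] [y e] hne.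
  rewrite {1}/pp; case h1: (ok s x1 (T1, v1, c1)) => // /Some_inj E1.
  rewrite {1}/pp; case h2: (ok s x2 (T2, v2, c2)) => // /Some_inj E2.
  have [hx1 hv1] := lemA h1; rewrite E1 /= in hx1 hv1.
  have [hx2 hv2] := lemA h2; rewrite E2 /= in hx2 hv2.
  have hTc : (val T1, c1) <> (val T2, c2).
    case=> eT ec; apply: hne.
    have eT' : T1 = T2 := val_inj eT.
    subst T2 c2; by rewrite hx1 hx2 hv1 hv2.
  have k12 := @lemK _ _ _ _ _ y e T1 T2 c1 c2 has hTc.
  have hTc' : (val T2, c2) <> (val T1, c1) by move=> E; apply: hTc.
  have k21 := @lemK _ _ _ _ _ y e T2 T1 c2 c1 has hTc'.
  rewrite -hx1 -hv2 in k12; rewrite -hx2 -hv1 in k21.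
  split.
  + by move=> E; rewrite E h2 in k12.
  + by case=> E1' E2' E3'; subst; rewrite h1 in k12.
  + by rewrite /pp (negbTE k12).
  + by rewrite /pp (negbTE k21).
Qed.

Theorem theorem4 (q z m t : nat) :
  0 < q -> 0 < z -> 0 < m -> 0 < t ->
  2 <= q -> z < q -> t < m ->
  PDA_exists ('C(m, t) * q ^ t * ((q - 1) %/ (q - z)) ^ t)
             (q ^ m)
             (q ^ m - (q - z) ^ t * q ^ (m - t))
             ((q - z) ^ t * q ^ m).
Proof.
move=> hq hz hm ht hq2 hzq htm.
have htr := leq_divM (q - 1) (q - z).
have [s' Es] : exists s', q - z = s'.+1 by exists (q - z).-1; rewrite prednK // subn_gt0.
rewrite Es in htr *.
have [a' Ea] : exists a', (q - 1) %/ s'.+1 = a'.+1.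
  exists ((q - 1) %/ s'.+1).-1; rewrite prednK // divn_gt0 //; lia.
rewrite Ea in htr *.
case: q hq hq2 hzq Es Ea htr => [//|q'] _ _ _ _ _ htr.
rewrite subn1 /= in htr.
case: m hm htm => [//|m'] _ htm.
case: t ht htm => [//|t'] _ htm.
apply: mainPDA; [move: htr; rewrite ?subn1 /=; lia | lia].
Qed.
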